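(* Let $|v_1\rangle,\dots,|v_8\rangle$ be unit vectors in $\mathbb{R}^3$ realizing the Clifton $01$-gadget measurement configuration, i.e., $\langle v_i|v_j\rangle = 0$ for every pair $\{i,j\}$ in $\{\{1,2\},\{1,3\},\{2,4\},\{2,6\},\{4,6\},\{3,5\},\{3,7\},\{5,7\},\{4,5\},\{6,8\},\{7,8\}\}$, and suppose they are measured on a state $|\psi\rangle$ for which the observed probabilities are $P(|v_1\rangle) = |\langle \psi|v_1\rangle|^2 = 1$ and $P(|v_8\rangle) = |\langle\psi|v_8\rangle|^2 = 1/9$. Then the set of projectors $\{|v_i\rangle\langle v_i|\}_{i=1}^8$ realizing this configuration in $\mathbb{R}^3$ is unique up to a common unitary (orthogonal) rotation and up to the relabelling $v_2\leftrightarrow v_3$, $v_4\leftrightarrow v_5$, $v_6\leftrightarrow v_7$.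
   Context: The Clifton $01$-gadget (Clifton bug) is the graph on vertices $1,\dots,8$ with the eleven edges listed in the claim; vertices $1$ and $8$ are its two distinguished non-adjacent vertices. $P(|v\rangle)$ denotes the probability of the outcome corresponding to the projector $|v\rangle\langle v|$ when measuring the state $|\psi\rangle$. *)

(* Defs.v *)
From HB Require Import structures.
From mathcomp Require Import all_boot all_order all_algebra.
From mathcomp Require Import reals.
Set Implicit Arguments. Unset Strict Implicit. Unset Printing Implicit Defensive.
Import Order.TTheory GRing.Theory Num.Theory.
Local Open Scope ring_scope.

Definition dotv (R : realType) (u v : 'rV[R]_3) : R := (u *m v^T) 0 0.

(* projector |v><v| (column-vector convention: v^T *m v) *)
Definition vproj (R : realType) (v : 'rV[R]_3) : 'M[R]_3 := v^T *m v.

Definition prob (R : realType) (psi v : 'rV[R]_3) : R := (dotv psi v) ^+ 2.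

Definition clifton_edges : seq (nat * nat) :=
  [:: (1,2); (1,3); (2,4); (2,6); (4,6); (3,5); (3,7); (5,7); (4,5); (6,8); (7,8)]%N.

Definition clifton_config (R : realType) (v : nat -> 'rV[R]_3) : Prop :=
  (forall i : nat, (1 <= i <= 8)%N -> dotv (v i) (v i) = 1) /\
  (forall i j : nat, (i, j) \in clifton_edges -> dotv (v i) (v j) = 0).

Definition clifton_swap (i : nat) : nat :=
  match i with
  | 2 => 3 | 3 => 2 | 4 => 5 | 5 => 4 | 6 => 7 | 7 => 6 | _ => i
  end%N.

(* Main.v *)
Require Import Defs.
From HB Require Import structures.
From mathcomp Require Import all_boot all_order all_algebra.
From mathcomp Require Import reals.
From mathcomp Require Import ring lra.
Import Order.TTheory GRing.Theory Num.Theory.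
Local Open Scope ring_scope.
Set Implicit Arguments. Unset Strict Implicit. Unset Printing Implicit Defensive.

Lemma prodrel (R : realType) (A k a b x y : R) :
  A*a = k*x -> A*b = k*y -> k^+2 = A -> A != 0 -> A*(a*b) = x*y.
Proof.
move=> ha hb hk hA.
have E : A*(A*(a*b)) = A*(x*y).
  have -> : A*(A*(a*b)) = (A*a)*(A*b) by ring.
  rewrite ha hb -hk; ring.
have E2 := mulfI hA E.
exact: E2.
Qed.

Lemma dotrel (R : realType) (A B k1 k8 a1 b1 c1 a8 b8 c8 m0 m1 m2 n0 n1 n2 : R) :
  A*a1 = k1 * m0 -> A*b1 = k1 * m1 -> A*c1 = k1 * m2 ->
  B*a8 = k8*n0 -> B*b8 = k8*n1 -> B*c8 = k8*n2 ->
  A*B*(a1*a8+b1*b8+c1*c8) = k1*k8*(m0 * n0 + m1 * n1 + m2 * n2).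
Proof.
move=> h1 h2 h3 h4 h5 h6.
have -> : A*B*(a1*a8+b1*b8+c1*c8) = (A*a1)*(B*a8)+(A*b1)*(B*b8)+(A*c1)*(B*c8) by ring.
rewrite h1 h2 h3 h4 h5 h6; ring.
Qed.

Lemma keyrel (R : realType) (A B k1 k8 D M : R) :
  k1^+2 = A -> k8^+2 = B -> A*B*D = k1*k8*M -> D^+2 = 1/9 ->
  A^+2*B^+2 = 9*(A*B*M^+2).
Proof.
move=> h1 h2 h E.
have F : (A*B*D)^+2 = (k1*k8*M)^+2 by rewrite h.
rewrite !exprMn h1 h2 E in F.
lra.
Qed.

Lemma finxy (R : realType) (x y : R) : 0 <= x <= 1 -> 0 <= y <= 1 ->
  x + (1-x)*y != 0 -> (1-x) + x*(1-y) != 0 ->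
  (x + (1-x)*y)*((1-x) + x*(1-y)) = 9*(x*(1-x)*(y*(1-y))) -> x = 1/2 /\ y = 1/2.
Proof.
move=> /andP[x0 x1] /andP[y0 y1] hA hB h.
have id : (x + (1-x)*y)*((1-x) + x*(1-y)) - 9*(x*(1-x)*(y*(1-y))) =
   (x-y)^+2 + (2*x-1)^+2*(y*(1-y)) + (2*y-1)^+2*(x*(1-x)) by ring.
have T1 : 0 <= (x-y)^+2 by apply: sqr_ge0.
have T2 : 0 <= (2*x-1)^+2*(y*(1-y)).
  apply: mulr_ge0; first exact: sqr_ge0.
  apply: mulr_ge0 => //; lra.
have T3 : 0 <= (2*y-1)^+2*(x*(1-x)).
  apply: mulr_ge0; first exact: sqr_ge0.
  apply: mulr_ge0 => //; lra.
have Z1 : (x-y)^+2 = 0 by lra.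
have Z2 : (2*x-1)^+2*(y*(1-y)) = 0 by lra.
move/eqP: Z1; rewrite sqrf_eq0 subr_eq0 => /eqP exy.
subst y.
move/eqP: Z2; rewrite mulf_eq0 sqrf_eq0 mulf_eq0 subr_eq0.
case/orP => [/eqP H | ]; first by split; lra.
case/orP => [/eqP x00|]; first by exfalso; move: hA; rewrite x00; apply/negP; rewrite negbK; apply/eqP; ring.
rewrite subr_eq0 => /eqP x11; exfalso; move: hB; rewrite -x11; apply/negP; rewrite negbK; apply/eqP; ring.
Qed.

Lemma normrel (R : realType) (A k a b c x y z : R) :
  A*a = k*x -> A*b = k*y -> A*c = k*z -> a^+2+b^+2+c^+2 = 1 ->
  k = x*a+y*b+z*c -> k^+2 = A.
Proof.
move=> ha hb hc hn hk.
have E : k^+2 = a*(k*x)+b*(k*y)+c*(k*z) by rewrite expr2 {2}hk; ring.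
rewrite -ha -hb -hc in E.
rewrite E. have -> : a * (A * a) + b * (A * b) + c * (A * c) = A*(a^+2+b^+2+c^+2) by ring.
by rewrite hn mulr1.
Qed.

Lemma core (R : realType) (p q r s t u w z a1 b1 c1 a8 b8 c8 : R) :
 p^+2+q^+2 = 1 -> r^+2+s^+2 = 1 -> p*r+q*s = 0 ->
 t^+2+u^+2 = 1 -> w^+2+z^+2 = 1 -> t*w+u*z = 0 ->
 a1^+2+b1^+2+c1^+2 = 1 -> b1* p+c1*q = 0 -> a1*t+c1*u = 0 ->
 a8^+2+b8^+2+c8^+2 = 1 -> b8*r+c8*s = 0 -> a8*w+c8*z = 0 ->
 (a1*a8+b1*b8+c1*c8)^+2 = 1/9 ->
 exists sg tg : R, (sg = 1 \/ sg = -1) /\ (tg = 1 \/ tg = -1) /\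
 (p^+2 = 1/2 /\ q^+2 = 1/2 /\ p*q = sg/2 /\ t^+2 = 1/2 /\ u^+2 = 1/2 /\ t*u = tg/2) /\
 (r^+2 = 1/2 /\ s^+2 = 1/2 /\ r*s = -sg/2 /\ w^+2 = 1/2 /\ z^+2 = 1/2 /\ w*z = -tg/2) /\
 (a1^+2 = 1/3 /\ b1^+2 = 1/3 /\ c1^+2 = 1/3 /\ a1*b1 = sg*tg/3 /\ a1*c1 = -tg/3 /\ b1*c1 = -sg/3) /\
 (a8^+2 = 1/3 /\ b8^+2 = 1/3 /\ c8^+2 = 1/3 /\ a8*b8 = sg*tg/3 /\ a8*c8 = tg/3 /\ b8*c8 = sg/3).
Proof.
move=> hp hrs hpr ht hwz htw h1n h12 h13 h8n h86 h87 hD.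
have [g [hr [hs hg]]] : exists g, r = -g*q /\ s = g* p /\ g^+2 = 1.
  exists (p*s-q*r); split; [|split].
  - have H1 : r*(p^+2+q^+2) = r*1 by rewrite hp.
    have H2 : p*(p*r+q*s) = p*0 by rewrite hpr.
    lra.
  - have H1 : s*(p^+2+q^+2) = s*1 by rewrite hp.
    have H2 : q*(p*r+q*s) = q*0 by rewrite hpr.
    lra.
  - have H1 : (p^+2+q^+2)*(r^+2+s^+2) = 1*1 by rewrite hp hrs.
    have H2 : (p*r+q*s)^+2 = 0^+2 by rewrite hpr.
    lra.
have [h [hw [hz hh]]] : exists h, w = -h*u /\ z = h*t /\ h^+2 = 1.
  exists (t*z-u*w); split; [|split].
  - have H1 : w*(t^+2+u^+2) = w*1 by rewrite ht.
    have H2 : t*(t*w+u*z) = t*0 by rewrite htw.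
    lra.
  - have H1 : z*(t^+2+u^+2) = z*1 by rewrite ht.
    have H2 : u*(t*w+u*z) = u*0 by rewrite htw.
    lra.
  - have H1 : (t^+2+u^+2)*(w^+2+z^+2) = 1*1 by rewrite ht hwz.
    have H2 : (t*w+u*z)^+2 = 0^+2 by rewrite htw.
    lra.
subst r s w z.
have g1 : c8* p - b8*q = 0.
  have H1 : (g^+2-1)*(c8* p-b8*q) = 0 by rewrite hg subrr mul0r.
  have H2 : g*(b8*(-g*q)+c8*(g* p)) = g*0 by rewrite h86.
  lra.
have g2 : c8*t - a8*u = 0.
  have H1 : (h^+2-1)*(c8*t-a8*u) = 0 by rewrite hh subrr mul0r.
  have H2 : h*(a8*(-h*u)+c8*(h*t)) = h*0 by rewrite h87.
  lra.
have [A hAdef] : exists A, A = p^+2*u^+2 + q^+2*t^+2 + p^+2*t^+2 by eexists.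
have [B hBdef] : exists B, B = q^+2*t^+2 + p^+2*u^+2 + q^+2*u^+2 by eexists.
have [k1 hk1] : exists k1, k1 = (p*u)*a1 + (q*t)*b1 + (-(p*t))*c1 by eexists.
have [k8 hk8] : exists k8, k8 = (-(q*t))*a8 + (-(p*u))*b8 + (-(q*u))*c8 by eexists.
have hA1 : A*a1 = k1*(p*u).
  rewrite hAdef hk1.
  have H1 : (q*t*u)*(b1* p+c1*q) = 0 by rewrite h12 mulr0.
  have H2 : (t*(p^+2+q^+2))*(a1*t+c1*u) = 0 by rewrite h13 mulr0.
  lra.
have hB1 : A*b1 = k1*(q*t).
  rewrite hAdef hk1.
  have H1 : (p*(t^+2+u^+2))*(b1* p+c1*q) = 0 by rewrite h12 mulr0.
  have H2 : (p*q*u)*(a1*t+c1*u) = 0 by rewrite h13 mulr0.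
  lra.
have hC1 : A*c1 = k1*(-(p*t)).
  rewrite hAdef hk1.
  have H1 : (p^+2*u)*(a1*t+c1*u) = 0 by rewrite h13 mulr0.
  have H2 : (q*t^+2)*(b1* p+c1*q) = 0 by rewrite h12 mulr0.
  lra.
have hA8 : B*a8 = k8*(-(q*t)).
  rewrite hBdef hk8.
  have H1 : (p*t*u)*(c8* p - b8*q) = 0 by rewrite g1 mulr0.
  have H2 : (u*(p^+2+q^+2))*(c8*t - a8*u) = 0 by rewrite g2 mulr0.
  lra.
have hB8 : B*b8 = k8*(-(p*u)).
  rewrite hBdef hk8.
  have H1 : (q*(t^+2+u^+2))*(c8* p - b8*q) = 0 by rewrite g1 mulr0.
  have H2 : (p*q*t)*(c8*t - a8*u) = 0 by rewrite g2 mulr0.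
  lra.
have hC8 : B*c8 = k8*(-(q*u)).
  rewrite hBdef hk8.
  have H1 : (q^+2*t)*(c8*t - a8*u) = 0 by rewrite g2 mulr0.
  have H2 : (p*u^+2)*(c8* p - b8*q) = 0 by rewrite g1 mulr0.
  lra.
have hkk1 := normrel hA1 hB1 hC1 h1n hk1. idtac.
have hkk8 : k8^+2 = B by apply: (normrel hA8 hB8 hC8 h8n hk8).
have hAB := dotrel hA1 hB1 hC1 hA8 hB8 hC8.
have hK := keyrel hkk1 hkk8 hAB hD.
have hAp : A = p^+2 + (1-p^+2)*t^+2.
  have H : p^+2*(t^+2+u^+2) = p^+2*1 by rewrite ht.
  have H2 : t^+2*(p^+2+q^+2) = t^+2*1 by rewrite hp.
  rewrite hAdef; lra.
have hAt : A = t^+2 + p^+2*u^+2.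
  have H : t^+2*(p^+2+q^+2) = t^+2*1 by rewrite hp.
  rewrite hAdef; lra.
have hBq : B = (1-p^+2) + p^+2*(1-t^+2).
  have H : q^+2*(t^+2+u^+2) = q^+2*1 by rewrite ht.
  have H' : p^+2*(t^+2+u^+2) = p^+2*1 by rewrite ht.
  rewrite hBdef; lra.
have hBu : B = u^+2 + q^+2*t^+2.
  have H : u^+2*(p^+2+q^+2) = u^+2*1 by rewrite hp.
  rewrite hBdef; lra.
have sq0 : forall x : R, x^+2 = 0 -> x = 0 by move=> x /eqP; rewrite sqrf_eq0 => /eqP.
have hA0 : A != 0.
  apply/eqP => A0.
  have Q1 : 0 <= (q*t)^+2 := sqr_ge0 _.
  have Q2 : 0 <= (p*u)^+2 := sqr_ge0 _.
  have Q3 : 0 <= p^+2 := sqr_ge0 _.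
  have Q4 : 0 <= t^+2 := sqr_ge0 _.
  have p0 : p = 0 by apply: sq0; rewrite exprMn in Q1 Q2; lra.
  have t0 : t = 0 by apply: sq0; rewrite exprMn in Q1 Q2; lra.
  subst p t.
  have c10 : c1 = 0.
    have H : u*(a1*0+c1*u) = 0 by rewrite h13 mulr0.
    have H' : c1*(0^+2+u^+2) = c1 by rewrite ht mulr1.
    lra.
  have b80 : b8 = 0.
    have H : q*(c8*0 - b8*q) = 0 by rewrite g1 mulr0.
    have H' : b8*(0^+2+q^+2) = b8 by rewrite hp mulr1.
    lra.
  have a80 : a8 = 0.
    have H : u*(c8*0 - a8*u) = 0 by rewrite g2 mulr0.
    have H' : a8*(0^+2+u^+2) = a8 by rewrite ht mulr1.
    lra.
  move: hD; rewrite c10 b80 a80; lra.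
have hB0 : B != 0.
  apply/eqP => B0.
  have Q1 : 0 <= (q*t)^+2 := sqr_ge0 _.
  have Q2 : 0 <= (p*u)^+2 := sqr_ge0 _.
  have Q3 : 0 <= q^+2 := sqr_ge0 _.
  have Q4 : 0 <= u^+2 := sqr_ge0 _.
  have hBq' : B = q^+2 + p^+2*u^+2.
    have H : q^+2*(t^+2+u^+2) = q^+2*1 by rewrite ht.
    rewrite hBdef; lra.
  have q0 : q = 0 by apply: sq0; rewrite exprMn in Q1 Q2; lra.
  have u0 : u = 0 by apply: sq0; rewrite exprMn in Q1 Q2; lra.
  subst q u.
  have b10 : b1 = 0.
    have H : p*(b1* p+c1*0) = 0 by rewrite h12 mulr0.
    have H' : b1*(p^+2+0^+2) = b1 by rewrite hp mulr1.
    lra.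
  have a10 : a1 = 0.
    have H : t*(a1*t+c1*0) = 0 by rewrite h13 mulr0.
    have H' : a1*(t^+2+0^+2) = a1 by rewrite ht mulr1.
    lra.
  have c80 : c8 = 0.
    have H : p*(c8* p - b8*0) = 0 by rewrite g1 mulr0.
    have H' : c8*(p^+2+0^+2) = c8 by rewrite hp mulr1.
    lra.
  move: hD; rewrite b10 a10 c80; lra.
have hAB0 : A*B != 0 by rewrite mulf_neq0.
have hK2 : A*B - 9*((p*u)*(-(q*t)) + (q*t)*(-(p*u)) + (-(p*t))*(-(q*u)))^+2 = 0.
  have H : (A*B)*(A*B - 9*((p*u)*(-(q*t)) + (q*t)*(-(p*u)) + (-(p*t))*(-(q*u)))^+2) = 0.
    rewrite mulrBr; have -> : A*B*(A*B) = A^+2*B^+2 by ring.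
    rewrite hK; ring.
  by move/eqP: H; rewrite mulf_eq0 (negbTE hAB0) /= => /eqP.
have hM : ((p*u)*(-(q*t)) + (q*t)*(-(p*u)) + (-(p*t))*(-(q*u)))^+2 = p^+2*q^+2*(t^+2*u^+2) by ring.
rewrite hM in hK2.
have hq2 : 1 - p^+2 = q^+2 by lra.
have hu2 : 1 - t^+2 = u^+2 by lra.
have E : (p^+2 + (1-p^+2)*t^+2)*((1-p^+2) + p^+2*(1-t^+2)) = 9*(p^+2*(1-p^+2)*(t^+2*(1-t^+2))).
  rewrite -hAp -hBq hq2 hu2; lra.
have [hx hy] : p^+2 = 1/2 /\ t^+2 = 1/2.
  apply: finxy E.
  - apply/andP; split; first exact: sqr_ge0. have := sqr_ge0 q; lra.
  - apply/andP; split; first exact: sqr_ge0. have := sqr_ge0 u; lra.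
  - by rewrite -hAp.
  - by rewrite -hBq.
have hq : q^+2 = 1/2 by lra.
have hu : u^+2 = 1/2 by lra.
have hA34 : A = 3/4 by rewrite hAp hx hy; lra.
have hB34 : B = 3/4 by rewrite hBq hx hy; lra.
have P11 := prodrel hA1 hA1 hkk1 hA0.
have P22 := prodrel hB1 hB1 hkk1 hA0.
have P33 := prodrel hC1 hC1 hkk1 hA0.
have P12 := prodrel hA1 hB1 hkk1 hA0.
have P13 := prodrel hA1 hC1 hkk1 hA0.
have P23 := prodrel hB1 hC1 hkk1 hA0.
have Q11 := prodrel hA8 hA8 hkk8 hB0.
have Q22 := prodrel hB8 hB8 hkk8 hB0.
have Q33 := prodrel hC8 hC8 hkk8 hB0.
have Q12 := prodrel hA8 hB8 hkk8 hB0.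
have Q13 := prodrel hA8 hC8 hkk8 hB0.
have Q23 := prodrel hB8 hC8 hkk8 hB0.
rewrite hA34 in P11 P22 P33 P12 P13 P23.
rewrite hB34 in Q11 Q22 Q33 Q12 Q13 Q23.
have F1 : (p^+2-1/2)*u^+2 = 0 by rewrite hx subrr mul0r.
have F2 : (p^+2-1/2)*t^+2 = 0 by rewrite hx subrr mul0r.
have F3 : (p^+2-1/2)*(t*u) = 0 by rewrite hx subrr mul0r.
have F4 : (q^+2-1/2)*u^+2 = 0 by rewrite hq subrr mul0r.
have F5 : (q^+2-1/2)*t^+2 = 0 by rewrite hq subrr mul0r.
have F6 : (q^+2-1/2)*(t*u) = 0 by rewrite hq subrr mul0r.
have F7 : (t^+2-1/2)*(p*q) = 0 by rewrite hy subrr mul0r.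
have F8 : (u^+2-1/2)*(p*q) = 0 by rewrite hu subrr mul0r.
have G1 : (g^+2-1)*(p*q) = 0 by rewrite hg subrr mul0r.
have G2 : (h^+2-1)*(t*u) = 0 by rewrite hh subrr mul0r.
have G3 : (g^+2-1)*q^+2 = 0 by rewrite hg subrr mul0r.
have G4 : (g^+2-1)* p^+2 = 0 by rewrite hg subrr mul0r.
have G5 : (h^+2-1)*u^+2 = 0 by rewrite hh subrr mul0r.
have G6 : (h^+2-1)*t^+2 = 0 by rewrite hh subrr mul0r.
have sgn : forall x : R, x^+2 = 1 -> x = 1 \/ x = -1.
  by move=> x /eqP; rewrite sqrf_eq1 => /orP[/eqP|/eqP]; auto.
clear hAdef hBdef hk1 hk8 hA1 hB1 hC1 hA8 hB8 hC8 hkk1 hkk8 hAB hK hK2 E hAp hAt hBq hBu hM h86 h87 hrs hpr hwz htw h1n h12 h13 h8n hD g1 g2 hA0 hB0 hAB0 hq2 hu2 sq0.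
exists (2*(p*q)), (2*(t*u)).
split; first by apply: sgn; rewrite !exprMn hx hq; lra.
split; first by apply: sgn; rewrite !exprMn hy hu; lra.
repeat split; lra.
Qed.

Notation i0 := (@Ordinal 3 0 isT).
Notation i1 := (@Ordinal 3 1 isT).
Notation i2 := (@Ordinal 3 2 isT).

Definition sel3 (T : Type) (x y z : T) (k : 'I_3) : T :=
  match nat_of_ord k with 0 => x | 1 => y | _ => z end%N.

Lemma dotvE (R : realType) (x y : 'rV[R]_3) :
  dotv x y = x 0 i0 * y 0 i0 + x 0 i1 * y 0 i1 + x 0 i2 * y 0 i2.
Proof.
rewrite /dotv mxE !big_ord_recl big_ord0 !mxE addr0 addrA.
have -> : (ord0 : 'I_3) = i0 by apply: val_inj.
have -> : lift i0 ord0 = i1 by apply: val_inj.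
have -> : lift i0 (lift ord0 ord0) = i2 by apply: val_inj.
by [].
Qed.

Lemma sel3_cases (T : Type) (P : 'I_3 -> Prop) : P i0 -> P i1 -> P i2 -> forall k, P k.
Proof.
move=> h0 h1 h2 [[|[|[|//]]] Hk].
- by have -> : Ordinal Hk = i0 by apply: val_inj.
- by have -> : Ordinal Hk = i1 by apply: val_inj.
- by have -> : Ordinal Hk = i2 by apply: val_inj.
Qed.

Lemma dotvC (R : realType) (x y : 'rV[R]_3) : dotv x y = dotv y x.
Proof. rewrite !dotvE; ring. Qed.

Definition cross (R : realType) (x y : 'rV[R]_3) : 'rV[R]_3 :=
  \row_(k < 3) sel3 (x 0 i1 * y 0 i2 - x 0 i2 * y 0 i1)
                    (x 0 i2 * y 0 i0 - x 0 i0 * y 0 i2)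
                    (x 0 i0 * y 0 i1 - x 0 i1 * y 0 i0) k.

Lemma cross_facts (R : realType) (x y : 'rV[R]_3) :
  [/\ dotv x (cross x y) = 0, dotv y (cross x y) = 0 &
      dotv (cross x y) (cross x y) = dotv x x * dotv y y - (dotv x y)^+2].
Proof. rewrite !dotvE !mxE /sel3 /=. split; ring. Qed.

Definition frame (R : realType) (a b c : 'rV[R]_3) : 'M[R]_3 :=
  \matrix_(k, j) (sel3 a b c k) 0 j.

Lemma frame_mul (R : realType) (a b c x : 'rV[R]_3) k :
  (x *m (frame a b c)^T) 0 k = sel3 (dotv x a) (dotv x b) (dotv x c) k.
Proof.
have -> : sel3 (dotv x a) (dotv x b) (dotv x c) k = dotv x (sel3 a b c k).
  by case: k => [[|[|[|//]]] Hk].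
rewrite /dotv !mxE; apply: eq_bigr => j _; rewrite !mxE.
by [].
Qed.

Lemma frame_orth (R : realType) (a b c : 'rV[R]_3) :
  dotv a a = 1 -> dotv b b = 1 -> dotv c c = 1 ->
  dotv a b = 0 -> dotv a c = 0 -> dotv b c = 0 ->
  frame a b c *m (frame a b c)^T = 1%:M.
Proof.
move=> haa hbb hcc hab hac hbc.
apply/matrixP => j k.
have -> : (frame a b c *m (frame a b c)^T) j k = dotv (sel3 a b c j) (sel3 a b c k).
  rewrite /dotv !mxE; apply: eq_bigr => l _; rewrite !mxE.
  by [].
rewrite !mxE.
case: j => [[|[|[|//]]] Hj]; case: k => [[|[|[|//]]] Hk] /=;
  rewrite ?haa ?hbb ?hcc ?hab ?hac ?hbc // dotvC ?hab ?hac ?hbc //.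
Qed.

Lemma parseval (R : realType) (F : 'M[R]_3) (x y : 'rV[R]_3) :
  F^T *m F = 1%:M -> dotv x y = \sum_(k < 3) (x *m F^T) 0 k * (y *m F^T) 0 k.
Proof.
move=> FtF.
have E : x *m y^T = (x *m F^T) *m (y *m F^T)^T.
  by rewrite trmx_mul trmxK mulmxA -(mulmxA x) FtF mulmx1.
rewrite /dotv E mxE; apply: eq_bigr => k _; rewrite !mxE.
by [].
Qed.

Lemma vproj_frame (R : realType) (F : 'M[R]_3) (x : 'rV[R]_3) :
  F^T *m F = 1%:M -> vproj x = F^T *m vproj (x *m F^T) *m F.
Proof.
move=> FtF.
rewrite /vproj trmx_mul trmxK !mulmxA FtF mul1mx -!mulmxA FtF mulmx1.
by [].
Qed.

Lemma vprojE (R : realType) (x : 'rV[R]_3) j k : vproj x j k = x 0 j * x 0 k.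
Proof. by rewrite /vproj !mxE big_ord1 !mxE. Qed.

Definition cano (R : realType) (i : nat) : R * R * R * R :=
  match i with
  | 1 => (1, 1, -1, 3)
  | 2 => (0, 1, 1, 2)
  | 3 => (1, 0, 1, 2)
  | 4 => (1, 0, 0, 1)
  | 5 => (0, 1, 0, 1)
  | 6 => (0, 1, -1, 2)
  | 7 => (1, 0, -1, 2)
  | _ => (1, 1, 1, 3)
  end.

Definition Pc (R : realType) (i : nat) : 'M[R]_3 :=
  let: (X, Y, Z, n) := cano R i in \matrix_(j, k) (sel3 X Y Z j * sel3 X Y Z k / n).



Lemma ok1 (R : realType) (sg tg a b c : R) (j k : 'I_3) : (sg = 1 \/ sg = -1) -> (tg = 1 \/ tg = -1) ->
  a^+2 = 1/3 -> b^+2 = 1/3 -> c^+2 = 1/3 -> a*b = sg*tg/3 -> a*c = -tg/3 -> b*c = -sg/3 ->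
  (sel3 a b c j * sel3 (sg*tg) 1 sg j) * (sel3 a b c k * sel3 (sg*tg) 1 sg k)
    = sel3 1 1 (-1) j * sel3 1 1 (-1) k / 3.
Proof. case: j => [[|[|[|//]]] ?]; case: k => [[|[|[|//]]] ?]; move=> [->|->] [->|->] *; rewrite /sel3 /=; lra. Qed.

Lemma ok8 (R : realType) (sg tg a b c : R) (j k : 'I_3) : (sg = 1 \/ sg = -1) -> (tg = 1 \/ tg = -1) ->
  a^+2 = 1/3 -> b^+2 = 1/3 -> c^+2 = 1/3 -> a*b = sg*tg/3 -> a*c = tg/3 -> b*c = sg/3 ->
  (sel3 a b c j * sel3 (sg*tg) 1 sg j) * (sel3 a b c k * sel3 (sg*tg) 1 sg k)
    = sel3 1 1 1 j * sel3 1 1 1 k / 3.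
Proof. case: j => [[|[|[|//]]] ?]; case: k => [[|[|[|//]]] ?]; move=> [->|->] [->|->] *; rewrite /sel3 /=; lra. Qed.

Lemma ok2 (R : realType) (sg tg p q : R) (j k : 'I_3) : (sg = 1 \/ sg = -1) -> (tg = 1 \/ tg = -1) ->
  p^+2 = 1/2 -> q^+2 = 1/2 -> p*q = sg/2 ->
  (sel3 0 p q j * sel3 (sg*tg) 1 sg j) * (sel3 0 p q k * sel3 (sg*tg) 1 sg k)
    = sel3 0 1 1 j * sel3 0 1 1 k / 2.
Proof. case: j => [[|[|[|//]]] ?]; case: k => [[|[|[|//]]] ?]; move=> [->|->] [->|->] *; rewrite /sel3 /=; lra. Qed.

Lemma ok6 (R : realType) (sg tg p q : R) (j k : 'I_3) : (sg = 1 \/ sg = -1) -> (tg = 1 \/ tg = -1) ->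
  p^+2 = 1/2 -> q^+2 = 1/2 -> p*q = -sg/2 ->
  (sel3 0 p q j * sel3 (sg*tg) 1 sg j) * (sel3 0 p q k * sel3 (sg*tg) 1 sg k)
    = sel3 0 1 (-1) j * sel3 0 1 (-1) k / 2.
Proof. case: j => [[|[|[|//]]] ?]; case: k => [[|[|[|//]]] ?]; move=> [->|->] [->|->] *; rewrite /sel3 /=; lra. Qed.

Lemma ok3 (R : realType) (sg tg p q : R) (j k : 'I_3) : (sg = 1 \/ sg = -1) -> (tg = 1 \/ tg = -1) ->
  p^+2 = 1/2 -> q^+2 = 1/2 -> p*q = tg/2 ->
  (sel3 p 0 q j * sel3 (sg*tg) 1 sg j) * (sel3 p 0 q k * sel3 (sg*tg) 1 sg k)
    = sel3 1 0 1 j * sel3 1 0 1 k / 2.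
Proof. case: j => [[|[|[|//]]] ?]; case: k => [[|[|[|//]]] ?]; move=> [->|->] [->|->] *; rewrite /sel3 /=; lra. Qed.

Lemma ok7 (R : realType) (sg tg p q : R) (j k : 'I_3) : (sg = 1 \/ sg = -1) -> (tg = 1 \/ tg = -1) ->
  p^+2 = 1/2 -> q^+2 = 1/2 -> p*q = -tg/2 ->
  (sel3 p 0 q j * sel3 (sg*tg) 1 sg j) * (sel3 p 0 q k * sel3 (sg*tg) 1 sg k)
    = sel3 1 0 (-1) j * sel3 1 0 (-1) k / 2.
Proof. case: j => [[|[|[|//]]] ?]; case: k => [[|[|[|//]]] ?]; move=> [->|->] [->|->] *; rewrite /sel3 /=; lra. Qed.

Lemma ok4 (R : realType) (sg tg : R) (j k : 'I_3) : (sg = 1 \/ sg = -1) -> (tg = 1 \/ tg = -1) ->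
  (sel3 1 0 0 j * sel3 (sg*tg) 1 sg j) * (sel3 1 0 0 k * sel3 (sg*tg) 1 sg k)
    = sel3 1 0 0 j * sel3 1 0 0 k / 1.
Proof. case: j => [[|[|[|//]]] ?]; case: k => [[|[|[|//]]] ?]; move=> [->|->] [->|->] *; rewrite /sel3 /=; lra. Qed.

Lemma ok5 (R : realType) (sg tg : R) (j k : 'I_3) : (sg = 1 \/ sg = -1) -> (tg = 1 \/ tg = -1) ->
  (sel3 0 1 0 j * sel3 (sg*tg) 1 sg j) * (sel3 0 1 0 k * sel3 (sg*tg) 1 sg k)
    = sel3 0 1 0 j * sel3 0 1 0 k / 1.
Proof. case: j => [[|[|[|//]]] ?]; case: k => [[|[|[|//]]] ?]; move=> [->|->] [->|->] *; rewrite /sel3 /=; lra. Qed.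

Lemma psi_scal (R : realType) (x0 x1 x2 y0 y1 y2 z0 z1 z2 : R) :
  x0*x0+x1*x1+x2*x2 = 1 -> y0*y0+y1*y1+y2*y2 = 1 -> (x0*y0+x1*y1+x2*y2)^+2 = 1 ->
  (x0*z0+x1*z1+x2*z2)^+2 = (y0*z0+y1*z1+y2*z2)^+2.
Proof.
move=> hx hy hxy.
have L : (x0*x0+x1*x1+x2*x2)*(y0*y0+y1*y1+y2*y2) - (x0*y0+x1*y1+x2*y2)^+2 =
  (x0*y1-x1*y0)^+2 + (x0*y2-x2*y0)^+2 + (x1*y2-x2*y1)^+2 by ring.
rewrite hx hy hxy mulr1 subrr in L.
have S1 := sqr_ge0 (x0*y1-x1*y0).
have S2 := sqr_ge0 (x0*y2-x2*y0).
have S3 := sqr_ge0 (x1*y2-x2*y1).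
have sq0 : forall x : R, x^+2 = 0 -> x = 0 by move=> x /eqP; rewrite sqrf_eq0 => /eqP.
have k01 : x0*y1-x1*y0 = 0 by apply: sq0; lra.
have k02 : x0*y2-x2*y0 = 0 by apply: sq0; lra.
have k12 : x1*y2-x2*y1 = 0 by apply: sq0; lra.
have [c hc] : exists c, c = x0*y0+x1*y1+x2*y2 by eexists.
have H0 : x0 = c*y0.
  have A1 : y1*(x0*y1-x1*y0) = 0 by rewrite k01 mulr0.
  have A2 : y2*(x0*y2-x2*y0) = 0 by rewrite k02 mulr0.
  have A3 : x0*(y0*y0+y1*y1+y2*y2) = x0 by rewrite hy mulr1.
  rewrite hc; lra.
have H1 : x1 = c*y1.
  have A1 : y0*(x0*y1-x1*y0) = 0 by rewrite k01 mulr0.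
  have A2 : y2*(x1*y2-x2*y1) = 0 by rewrite k12 mulr0.
  have A3 : x1*(y0*y0+y1*y1+y2*y2) = x1 by rewrite hy mulr1.
  rewrite hc; lra.
have H2 : x2 = c*y2.
  have A1 : y0*(x0*y2-x2*y0) = 0 by rewrite k02 mulr0.
  have A2 : y1*(x1*y2-x2*y1) = 0 by rewrite k12 mulr0.
  have A3 : x2*(y0*y0+y1*y1+y2*y2) = x2 by rewrite hy mulr1.
  rewrite hc; lra.
rewrite -hc in hxy.
rewrite H0 H1 H2.
have -> : c * y0 * z0 + c * y1 * z1 + c * y2 * z2 = c * (y0*z0+y1*z1+y2*z2) by ring.
by rewrite exprMn hxy mul1r.
Qed.

Lemma psi_lem (R : realType) (x y z : 'rV[R]_3) :
  dotv x x = 1 -> dotv y y = 1 -> (dotv x y)^+2 = 1 -> (dotv x z)^+2 = (dotv y z)^+2.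
Proof. rewrite !dotvE; exact: psi_scal. Qed.

Lemma diag_orth (R : realType) (sg tg : R) : (sg = 1 \/ sg = -1) -> (tg = 1 \/ tg = -1) ->
  diag_mx (\row_(k < 3) sel3 (sg*tg) 1 sg k) *m (diag_mx (\row_(k < 3) sel3 (sg*tg) 1 sg k))^T = 1%:M.
Proof.
move=> hs ht; rewrite tr_diag_mx.
apply/matrixP => j k; rewrite mul_diag_mx !mxE.
case: j => [[|[|[|//]]] ?]; case: k => [[|[|[|//]]] ?]; rewrite /sel3 /=;
  case: hs => E1; case: ht => E2; rewrite ?E1 ?E2; lra.
Qed.

Lemma canon (R : realType) (v : nat -> 'rV[R]_3) :
  clifton_config v -> (dotv (v 1%N) (v 8%N))^+2 = 1/9 ->
  exists F : 'M[R]_3, F *m F^T = 1%:M /\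
    forall i, (1 <= i <= 8)%N -> vproj (v i) = F^T *m Pc R i *m F.
Proof.
move=> [hn he] h18.
have n1 := hn 1%N isT. have n2 := hn 2%N isT. have n3 := hn 3%N isT.
have n4 := hn 4%N isT. have n5 := hn 5%N isT. have n6 := hn 6%N isT.
have n7 := hn 7%N isT. have n8 := hn 8%N isT.
have e12 := he 1%N 2%N isT. have e13 := he 1%N 3%N isT.
have e24 := he 2%N 4%N isT. have e26 := he 2%N 6%N isT.
have e46 := he 4%N 6%N isT. have e35 := he 3%N 5%N isT.
have e37 := he 3%N 7%N isT. have e57 := he 5%N 7%N isT.
have e45 := he 4%N 5%N isT. have e68 := he 6%N 8%N isT.
have e78 := he 7%N 8%N isT.
clear hn he.
set a := v 4%N. set b := v 5%N.
set c := cross a b.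
have [hac hbc hcc'] := cross_facts a b.
have hcc : dotv c c = 1 by rewrite hcc' n4 n5 e45 expr0n /= subr0 mulr1.
have GGt := frame_orth n4 n5 hcc e45 hac hbc.
set G := frame a b c in GGt.
have GtG := mulmx1C GGt.
have PP : forall x y, dotv x y = dotv x a * dotv y a + dotv x b * dotv y b + dotv x c * dotv y c.
  move=> x y; rewrite (parseval x y GtG) !big_ord_recl big_ord0 !frame_mul /sel3 /=.
  by rewrite addr0 addrA.
have z2a : dotv (v 2%N) a = 0 by [].
have z6a : dotv (v 6%N) a = 0 by rewrite dotvC.
have z3b : dotv (v 3%N) b = 0 by [].
have z7b : dotv (v 7%N) b = 0 by rewrite dotvC.
have hp : (dotv (v 2%N) b)^+2 + (dotv (v 2%N) c)^+2 = 1.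
  by have := PP (v 2%N) (v 2%N); rewrite n2 z2a; lra.
have hrs : (dotv (v 6%N) b)^+2 + (dotv (v 6%N) c)^+2 = 1.
  by have := PP (v 6%N) (v 6%N); rewrite n6 z6a; lra.
have hpr : dotv (v 2%N) b * dotv (v 6%N) b + dotv (v 2%N) c * dotv (v 6%N) c = 0.
  by have := PP (v 2%N) (v 6%N); rewrite e26 z2a z6a; lra.
have ht : (dotv (v 3%N) a)^+2 + (dotv (v 3%N) c)^+2 = 1.
  by have := PP (v 3%N) (v 3%N); rewrite n3 z3b; lra.
have hwz : (dotv (v 7%N) a)^+2 + (dotv (v 7%N) c)^+2 = 1.
  by have := PP (v 7%N) (v 7%N); rewrite n7 z7b; lra.
have htw : dotv (v 3%N) a * dotv (v 7%N) a + dotv (v 3%N) c * dotv (v 7%N) c = 0.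
  by have := PP (v 3%N) (v 7%N); rewrite e37 z3b z7b; lra.
have h1n : (dotv (v 1%N) a)^+2 + (dotv (v 1%N) b)^+2 + (dotv (v 1%N) c)^+2 = 1.
  by have := PP (v 1%N) (v 1%N); rewrite n1; lra.
have h12 : dotv (v 1%N) b * dotv (v 2%N) b + dotv (v 1%N) c * dotv (v 2%N) c = 0.
  by have := PP (v 1%N) (v 2%N); rewrite e12 z2a; lra.
have h13 : dotv (v 1%N) a * dotv (v 3%N) a + dotv (v 1%N) c * dotv (v 3%N) c = 0.
  by have := PP (v 1%N) (v 3%N); rewrite e13 z3b; lra.
have h8n : (dotv (v 8%N) a)^+2 + (dotv (v 8%N) b)^+2 + (dotv (v 8%N) c)^+2 = 1.
  by have := PP (v 8%N) (v 8%N); rewrite n8; lra.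
have h86 : dotv (v 8%N) b * dotv (v 6%N) b + dotv (v 8%N) c * dotv (v 6%N) c = 0.
  by have := PP (v 8%N) (v 6%N); rewrite dotvC e68 z6a; lra.
have h87 : dotv (v 8%N) a * dotv (v 7%N) a + dotv (v 8%N) c * dotv (v 7%N) c = 0.
  by have := PP (v 8%N) (v 7%N); rewrite dotvC e78 z7b; lra.
have hD : (dotv (v 1%N) a * dotv (v 8%N) a + dotv (v 1%N) b * dotv (v 8%N) b
           + dotv (v 1%N) c * dotv (v 8%N) c)^+2 = 1/9 by rewrite -PP.
have [sg [tg [hs [ht' [[F2a [F2b [F2c [F3a [F3b F3c]]]]] [[F6a [F6b [F6c [F7a [F7b F7c]]]]]
  [[F1a [F1b [F1c [F1d [F1e F1f]]]]] [F8a [F8b [F8c [F8d [F8e F8f]]]]]]]]]]]] :=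
  core hp hrs hpr ht hwz htw h1n h12 h13 h8n h86 h87 hD.
set dd : 'rV[R]_3 := \row_(k < 3) sel3 (sg*tg) 1 sg k.
set F := diag_mx dd *m G.
have FFt : F *m F^T = 1%:M.
  rewrite /F trmx_mul mulmxA -(mulmxA (diag_mx dd)) GGt mulmx1.
  exact: diag_orth.
have FtF := mulmx1C FFt.
have Fv : forall x j, (x *m F^T) 0 j = sel3 (dotv x a) (dotv x b) (dotv x c) j * sel3 (sg*tg) 1 sg j.
  move=> x j; rewrite /F trmx_mul tr_diag_mx mulmxA mul_mx_diag mxE frame_mul mxE.
  by [].
exists F; split => // i /andP[i1 i8].
rewrite (vproj_frame (v i) FtF); congr (_ *m _ *m _).
apply/matrixP => j k; rewrite vprojE !Fv.
case: i i1 i8 => [|[|[|[|[|[|[|[|[|i]]]]]]]]] // _ _; rewrite /Pc /= mxE.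
- exact: ok1.
- rewrite z2a; exact: ok2.
- rewrite z3b; exact: ok3.
- rewrite -/a n4 e45 hac; exact: ok4.
- rewrite -/b dotvC e45 n5 hbc; exact: ok5.
- rewrite z6a; exact: ok6.
- rewrite z7b; exact: ok7.
- exact: ok8.
Qed.

Unset Implicit Arguments.

Theorem mainTheorem5 (R : realType) (v w : nat -> 'rV[R]_3) (psi phi : 'rV[R]_3) :
  clifton_config v -> dotv psi psi = 1 ->
  prob psi (v 1%N) = 1 -> prob psi (v 8%N) = 1 / 9%:R ->
  clifton_config w -> dotv phi phi = 1 ->
  prob phi (w 1%N) = 1 -> prob phi (w 8%N) = 1 / 9%:R ->
  exists U : 'M[R]_3, U *m U^T = 1%:M /\
    ((forall i : nat, (1 <= i <= 8)%N -> vproj (w i) = U^T *m vproj (v i) *m U) \/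
     (forall i : nat, (1 <= i <= 8)%N ->
        vproj (w i) = U^T *m vproj (v (clifton_swap i)) *m U)).
Proof.
move=> Hv hpsi h1 h8 Hw hphi k1 k8.
have Hv18 : (dotv (v 1%N) (v 8%N))^+2 = 1/9.
  rewrite -(psi_lem _ hpsi (proj1 Hv 1%N isT) h1); exact: h8.
have Hw18 : (dotv (w 1%N) (w 8%N))^+2 = 1/9.
  rewrite -(psi_lem _ hphi (proj1 Hw 1%N isT) k1); exact: k8.
have [F1 [hF1 hv]] := canon Hv Hv18.
have [F2 [hF2 hw]] := canon Hw Hw18.
have hF1' := mulmx1C hF1.
exists (F1^T *m F2); split.
  by rewrite trmx_mul trmxK mulmxA -(mulmxA F1^T) hF2 mulmx1.
left => i hi.
rewrite hw // hv // trmx_mul trmxK.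
rewrite !mulmxA -(mulmxA _ F1) hF1 mulmx1 -(mulmxA _ F1) hF1 mulmx1.
by [].
Qed.
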